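(* For every set $\mathfrak W$ of bracket patterns, $\bigcup_{w\in\langle\!\langle\mathfrak W\rangle\!\rangle}A(w)=\bigcup_{w\in\mathfrak W}A(w)$. In particular, $\bigcup_{w'\in\langle\!\langle w\rangle\!\rangle}A(w')=A(w)$ for every bracket pattern $w$.
   Context: $\mathbb N=\{1,2,\dots\}$, $\mathbb N_0=\mathbb N\cup\{0\}$. A bracket pattern is a non-empty finite subset $w\subseteq\mathbb N$; $\|w\|:=\max(w)$. For bracket patterns $w,w'$: superposition $w\cup w'$; for $j\in w$ the projection $\cap_j w:=\{i\in w\mid i\le j\}$; the dual $w^\dagger:=\{\|w\|-i\mid i\in\mathbb N_0,\ i<\|w\|,\ i\notin w\}$. A bracket pattern category is a (possibly empty) set of bracket patterns closed under superposition, duals and projections; $\langle\!\langle\mathfrak W\rangle\!\rangle$ is the smallest bracket pattern category containing $\mathfrak W$, and $\langle\!\langle w\rangle\!\rangle:=\langle\!\langle\{w\}\rangle\!\rangle$. The completion of a bracket pattern $w$ is $A(w):=\{j-i\mid j\in w,\ i\in\mathbb N_0,\ i\notin w,\ i<j\}$. *)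

(* Defs.v *)
From mathcomp Require Import all_boot.
From mathcomp Require Import finmap.
Set Implicit Arguments. Unset Strict Implicit. Unset Printing Implicit Defensive.
Local Open Scope fset_scope.

Definition is_bp (w : {fset nat}) : Prop := w != fset0 /\ (0 \notin w).

Definition bpnorm (w : {fset nat}) : nat := \max_(i <- w) i.

Definition bproj (j : nat) (w : {fset nat}) : {fset nat} :=
  [fset i in w | (i <= j)%N].

Definition bdual (w : {fset nat}) : {fset nat} :=
  [fset (bpnorm w - i)%N | i in [seq i <- iota 0 (bpnorm w) | i \notin w]].

Definition is_bp_category (C : {fset nat} -> Prop) : Prop :=
  [/\ (forall w, C w -> is_bp w),
      (forall w w', C w -> C w' -> C (w `|` w')),
      (forall w, C w -> C (bdual w))
    & (forall w j, C w -> j \in w -> C (bproj j w))].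

Definition bp_gen (W : {fset nat} -> Prop) : {fset nat} -> Prop :=
  fun w => forall C, is_bp_category C -> (forall v, W v -> C v) -> C w.

Definition completion (w : {fset nat}) : nat -> Prop :=
  fun n => exists j i, j \in w /\ i \notin w /\ (i < j)%N /\ n = (j - i)%N.

(* Main.v *)
Require Import Defs.
From mathcomp Require Import all_boot.
From mathcomp Require Import finmap.
From mathcomp Require Import zify.
Local Open Scope fset_scope.

Lemma max_in_seq (s : seq nat) : s != [::] -> \max_(i <- s) i \in s.
Proof.
elim: s => [//|a s IH] _.
rewrite big_cons inE.
case: s IH => [|b s] IH; first by rewrite big_nil maxn0 eqxx.
have /IH H : b :: s != [::] by [].
case: (leqP a (\max_(i <- b :: s) i)) => h.
  by rewrite H orbT.
by rewrite eqxx.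
Qed.

Lemma norm_in w : w != fset0 -> bpnorm w \in w.
Proof.
move=> hw; rewrite /bpnorm.
have : enum_fset w != [::].
  apply: contra hw => /eqP e; apply/eqP/fsetP => x.
  rewrite inE; change (x \in enum_fset w = false); by rewrite e.
by move/max_in_seq.
Qed.

Lemma le_norm w i : i \in w -> (i <= bpnorm w)%N.
Proof. by move=> h; rewrite /bpnorm; apply: (@leq_bigmax_seq _ _ xpredT (fun i => i)). Qed.

Lemma dualP w k : reflect (exists2 i, (i < bpnorm w)%N /\ i \notin w & k = (bpnorm w - i)%N)
   (k \in bdual w).
Proof.
rewrite /bdual; apply: (iffP (imfsetP _ _ _ _)) => [[i]|[i [h1 h2]] ->].
  by rewrite /= mem_filter mem_iota add0n => /andP[h1 h2] ->; exists i.
by exists i => //=; rewrite mem_filter mem_iota add0n h2 h1.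
Qed.

Lemma compl_union w w' n : completion (w `|` w') n -> completion w n \/ completion w' n.
Proof.
move=> [j [i [hj [hi [hij ->]]]]].
move: hj hi; rewrite !inE negb_or => /orP[] hj /andP[h1 h2].
  by left; exists j, i.
by right; exists j, i.
Qed.

Lemma compl_proj w j n : completion (bproj j w) n -> completion w n.
Proof.
move=> [k [i [hk [hi [hik ->]]]]].
move: hk hi; rewrite /bproj !inE /= => /andP[hk hkj] hi.
exists k, i; split => //; split => //.
apply: contra hi => hiw; rewrite hiw /=.
exact: leq_trans (ltnW hik) hkj.
Qed.

Lemma compl_dual w n : w != fset0 -> completion (bdual w) n -> completion w n.
Proof.
move=> hw [k [m [hk [hm [hmk ->]]]]]; case/dualP: hk hmk => i [hi1 hi2] -> hmk.
set N := bpnorm w in hi1 hi2 hmk hm *.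
have hmN : (m < N)%N by lia.
have hNm : (N - m) \in w.
  case: (boolP ((N - m) \in w)) => // h.
  case/negP: hm; apply/dualP; exists (N - m).
    split => //.
    have hm0 : (0 < m)%N.
      case: m hmk h {hmN} => // _; rewrite subn0 => h.
      by move: (norm_in w hw); rewrite -/N (negbTE h).
    lia.
  lia.
exists (N - m), i; split => //; split => //; split.
  lia.
lia.
Qed.

Lemma part1 (W : {fset nat} -> Prop) :
  (forall w, W w -> is_bp w) ->
  forall n : nat,
    (exists w, bp_gen W w /\ completion w n) <->
    (exists w, W w /\ completion w n).
Proof.
move=> hW n; split; last first.
  by move=> [w [hw hc]]; exists w; split => // C _; apply.
move=> [w [hg hc]].
pose C := fun w => is_bp w /\ forall n, completion w n -> exists v, W v /\ completion v n.
have : C w; last by case=> _; apply.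
apply: hg; last by move=> v hv; split; [exact: hW | move=> m hm; exists v].
split.
- by move=> v [].
- move=> v v' [[hv0 hv1] hv] [[hv0' hv1'] hv']; split.
    split; last by rewrite inE negb_or hv1 hv1'.
    apply: contra hv0 => /eqP e; apply/eqP/fsetP => x.
    by move/fsetP: e => /(_ x); rewrite !inE; case: (x \in v).
  by move=> m /compl_union [/hv|/hv'].
- move=> v [[hv0 hv1] hv]; split; last by move=> m /compl_dual -/(_ hv0) /hv.
  have hN : (0 < bpnorm v)%N.
    by rewrite lt0n; apply: contra hv1 => /eqP <-; apply: norm_in.
  split.
    apply/negP => /eqP e.
    have : bpnorm v \in bdual v by apply/dualP; exists 0 => //; rewrite subn0.
    by rewrite e inE.
  apply/negP => /dualP [i [h1 _]] /eqP; rewrite eq_sym subn_eq0 leqNgt h1.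
  done.
- move=> v j [[hv0 hv1] hv] hj; split; last by move=> m /compl_proj /hv.
  split; last by rewrite !inE (negbTE hv1).
  apply/negP => /eqP e.
  have : j \in bproj j v by rewrite !inE hj leqnn.
  by rewrite e inE.
Qed.

Theorem proposition7p6 :
  (forall (W : {fset nat} -> Prop),
     (forall w, W w -> is_bp w) ->
     forall n : nat,
       (exists w, bp_gen W w /\ completion w n) <->
       (exists w, W w /\ completion w n))
  /\
  (forall w : {fset nat}, is_bp w ->
     forall n : nat,
       (exists w', bp_gen (fun v => v = w) w' /\ completion w' n) <->
       completion w n).
Proof.
split; first exact: part1.
move=> w hw n; rewrite part1; last by move=> v ->.
by split; [move=> [v [-> h]] | move=> h; exists w].
Qed.
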